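(* Let $\gamma>0$ and $\delta\ge 0$ be given, and let $(S,L,H)$ be an open quantum system with $H=H_P+H_{un}$, where $H_{un}\in\mathcal W_1$. Let $w,z$ be real (i.e. componentwise self-adjoint) vectors of operators witnessing $H_{un}\in\mathcal W_1$: - for every $V\in\mathcal P$ they satisfy $[V,H_{un}]=[V,z^T]w-w^T[z,V]$; - they satisfy the sector bound $w^Tw\le \frac{1}{\gamma^2}z^Tz+\delta$. Let $W$ be a non-negative self-adjoint operator. Suppose there exist $V\in\mathcal P$ and a real constant $\lambda\ge 0$ such that $$-i[V,H_P]+\mathcal L(V)+[V,z^T][z,V]+\frac{1}{\gamma^2}z^Tz+W\le \lambda .$$ Then, for any initial state, $$\limsup_{T\to\infty}\frac1T\int_0^T\langle W(t)\rangle\,dt\le \lambda+\delta .$$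
   Context: **Canonical operators.** Let $n\ge1$. Let $q=(q_1,\dots,q_n)^T$ and $p=(p_1,\dots,p_n)^T$ be vectors of self-adjoint (position and momentum) operators on a Hilbert space, and write $x=(q^T,p^T)^T$. They satisfy the canonical commutation relations $[x,x^T]:=xx^T-(xx^T)^T=2i\theta=:\Sigma$, i.e. $[x_j,x_k]=2i\theta_{jk}$, where $\theta=\begin{pmatrix}0&I_n\\-I_n&0\end{pmatrix}$. **Commutator conventions.** $[A,B]=AB-BA$. For an operator $V$ and a column vector of operators $z$: - $[V,z^T]$ is the row vector with entries $[V,z_k]$; - $[z,V]$ is the column vector with entries $[z_k,V]$. For a vector of operators $L$, $L^\#$ denotes the componentwise adjoint and $L^\dagger=(L^\#)^T$. Operator inequalities $A\le B$ mean $B-A$ is positive semidefinite, and real constants are identified with multiples of the identity. **Open quantum system.** An open quantum system is specified by $(S,L,H)$, where $S$ is a scattering matrix, $L$ is a vector of coupling operators and $H$ is a self-adjoint Hamiltonian. Its generator is $$\mathcal G(\mathbf X)=-i[\mathbf X,H]+\mathcal L(\mathbf X),\qquad \mathcal L(\mathbf X)=\tfrac12L^\dagger[\mathbf X,L]+\tfrac12[L^\dagger,\mathbf X]L.$$ $W(t)$ denotes the Heisenberg evolution of an operator $W$ under this system, and $\langle\cdot\rangle$ denotes quantum expectation. **Known fact (may be used).** If $V,W$ are non-negative self-adjoint operators and $\lambda\in\mathbb R$ satisfy $\mathcal G(V)+W\le\lambda$, then for any initial state $\limsup_{T\to\infty}\frac1T\int_0^T\langle W(t)\rangle dt\le\lambda$.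 **The set $\mathcal P$.** $\mathcal P$ is the set of operators $V=x^TXx$ with $X\in\mathbb R^{2n\times 2n}$ symmetric positive definite. **The set $\mathcal W_1$.** Given $\gamma>0$ and $\delta\ge0$, $\mathcal W_1$ is the set of self-adjoint operators $H_{un}$ for which there exist real vectors of operators $w,z$ such that: - $[V,H_{un}]=[V,z^T]w-w^T[z,V]$ holds for all $V\in\mathcal P$; - $w^Tw\le \frac1{\gamma^2}z^Tz+\delta$. *)

(* Defs.v *)
From HB Require Import structures.
From mathcomp Require Import all_boot all_order all_algebra.
Set Implicit Arguments. Unset Strict Implicit. Unset Printing Implicit Defensive.
Import Order.TTheory GRing.Theory Num.Theory.
Local Open Scope ring_scope.

Section Ops.
Variables (C : numClosedFieldType) (A : algType C).

Definition comm (a b : A) : A := a * b - b * a.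

(* Axioms of a *-algebra over C with a positive cone [pos]
   (the cone of positive semidefinite operators). *)
Record star_alg (star : A -> A) (pos : A -> Prop) : Prop := StarAlg {
  star_add : forall a b, star (a + b) = star a + star b;
  star_scale : forall (c : C) a, star (c *: a) = c^* *: star a;
  star_mul : forall a b, star (a * b) = star b * star a;
  star_invol : forall a, star (star a) = a;
  pos_add : forall a b, pos a -> pos b -> pos (a + b);
  pos_scale : forall (c : C) a, 0 <= c -> pos a -> pos (c *: a);
  pos_sq : forall a, pos (star a * a)
}.

Definition opLe (pos : A -> Prop) (a b : A) : Prop := pos (b - a).

Definition nonneg_sa (star : A -> A) (pos : A -> Prop) (a : A) : Prop :=
  star a = a /\ pos a.

Definition real_vec (star : A -> A) (m : nat) (v : 'I_m -> A) : Prop :=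
  forall k, star (v k) = v k.

Definition theta (n : nat) : 'M[C]_(n + n) :=
  block_mx 0 1%:M (- 1%:M) 0.

Definition CCR (star : A -> A) (n : nat) (x : 'I_(n + n) -> A) : Prop :=
  (forall j, star (x j) = x j) /\
  (forall j k, comm (x j) (x k) = (2 * 'i * theta n j k) *: 1).

Definition real_spd (N : nat) (X : 'M[C]_N) : Prop :=
  (forall i j, X i j \is Num.real) /\ X^T = X /\
  (forall v : 'cV[C]_N, (forall i, v i 0 \is Num.real) -> v != 0 ->
     0 < (v^T *m X *m v) 0 0).

Definition inP (n : nat) (x : 'I_(n + n) -> A) (V : A) : Prop :=
  exists X : 'M[C]_(n + n), real_spd X /\
    V = \sum_(j < n + n) \sum_(k < n + n) X j k *: (x j * x k).

Definition lindblad (star : A -> A) (m : nat) (L : 'I_m -> A) (X : A) : A :=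
  2^-1 *: (\sum_(k < m) star (L k) * comm X (L k))
  + 2^-1 *: (\sum_(k < m) comm (star (L k)) X * L k).

Definition generator (star : A -> A) (m : nat) (L : 'I_m -> A) (H X : A) : A :=
  - 'i *: comm X H + lindblad star L X.

Definition limsup_le (f : C -> C) (c : C) : Prop :=
  forall eps : C, 0 < eps -> exists T0 : C, T0 \is Num.real /\
    forall T : C, T \is Num.real -> T0 <= T -> f T <= c + eps.

End Ops.

(* Main.v *)
Require Import Defs.
From mathcomp Require Import all_boot all_order all_algebra.
From mathcomp Require Import ring.
Import Order.TTheory GRing.Theory Num.Theory.
Local Open Scope ring_scope.
Set Implicit Arguments. Unset Strict Implicit.

Section Help.
Variables (C : numClosedFieldType) (A : algType C).
Variables (star : A -> A) (pos : A -> Prop) (hA : star_alg star pos).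

Lemma star0 : star 0 = 0.
Proof.
have h := star_add hA 0 0. rewrite addr0 in h.
by apply: (addrI (star 0)); rewrite -h addr0.
Qed.

Lemma starN a : star (- a) = - star a.
Proof.
by rewrite -scaleN1r (star_scale hA) rmorphN1 scaleN1r.
Qed.

Lemma starB a b : star (a - b) = star a - star b.
Proof. by rewrite (star_add hA) starN. Qed.

Lemma star_sum N (F : 'I_N -> A) : star (\sum_(i < N) F i) = \sum_(i < N) star (F i).
Proof. exact: (big_morph star (star_add hA) star0). Qed.

Lemma pos0 : pos 0.
Proof. by have := pos_sq hA 0; rewrite mulr0. Qed.

Lemma pos_sum N (F : 'I_N -> A) : (forall i, pos (F i)) -> pos (\sum_(i < N) F i).
Proof.
move=> h; apply: (big_ind pos pos0 (pos_add hA)) => i _; exact: h.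
Qed.

Definition qf {N} (X : 'I_N -> 'I_N -> C) (v : 'I_N -> C) :=
  \sum_(i < N) \sum_(j < N) v i * X i j * v j.
Definition opf {N} (X : 'I_N -> 'I_N -> C) (y : 'I_N -> A) :=
  \sum_(j < N) \sum_(k < N) X j k *: (y j * y k).

Definition ext {N} (t : C) (v : 'I_N -> C) (i : 'I_N.+1) : C :=
  if unlift ord0 i is Some k then v k else t.
Lemma ext0 N t (v : 'I_N -> C) : ext t v ord0 = t.
Proof. by rewrite /ext unlift_none. Qed.
Lemma extS N t (v : 'I_N -> C) k : ext t v (lift ord0 k) = v k.
Proof. by rewrite /ext liftK. Qed.

Lemma qf_rec N (X : 'I_N.+1 -> 'I_N.+1 -> C) v :
  qf X v = v ord0 * X ord0 ord0 * v ord0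
    + \sum_(k < N) v ord0 * X ord0 (lift ord0 k) * v (lift ord0 k)
    + \sum_(j < N) (v (lift ord0 j) * X (lift ord0 j) ord0 * v ord0
       + \sum_(k < N) v (lift ord0 j) * X (lift ord0 j) (lift ord0 k) * v (lift ord0 k)).
Proof.
rewrite /qf big_ord_recl; congr (_ + _); first by rewrite big_ord_recl.
by apply: eq_bigr => j _; rewrite big_ord_recl.
Qed.

Lemma qf_ext N (X : 'I_N.+1 -> 'I_N.+1 -> C) t v :
  qf X (ext t v) = t * X ord0 ord0 * t
    + \sum_(k < N) t * X ord0 (lift ord0 k) * v k
    + \sum_(j < N) (v j * X (lift ord0 j) ord0 * t
       + \sum_(k < N) v j * X (lift ord0 j) (lift ord0 k) * v k).
Proof.
rewrite qf_rec ext0; congr (_ + _ + _); apply: eq_bigr => j _; rewrite ?extS //.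
by congr (_ + _); apply: eq_bigr => k _; rewrite !extS.
Qed.

Lemma opf_rec N (X : 'I_N.+1 -> 'I_N.+1 -> C) y :
  opf X y = X ord0 ord0 *: (y ord0 * y ord0)
    + \sum_(k < N) X ord0 (lift ord0 k) *: (y ord0 * y (lift ord0 k))
    + \sum_(j < N) (X (lift ord0 j) ord0 *: (y (lift ord0 j) * y ord0)
       + \sum_(k < N) X (lift ord0 j) (lift ord0 k) *: (y (lift ord0 j) * y (lift ord0 k))).
Proof.
rewrite /opf big_ord_recl; congr (_ + _); first by rewrite big_ord_recl.
by apply: eq_bigr => j _; rewrite big_ord_recl.
Qed.

Lemma chol N : forall (X : 'I_N -> 'I_N -> C) (y : 'I_N -> A),
  (forall j, star (y j) = y j) ->
  (forall i j, X i j \is Num.real) -> (forall i j, X i j = X j i) ->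
  (forall v, (forall i, v i \is Num.real) -> (exists i, v i != 0) -> 0 < qf X v) ->
  pos (opf X y).
Proof.
elim: N => [|N IH] X y hy hr hs hp.
  by rewrite /opf big_ord0; exact: pos0.
pose a := X ord0 ord0.
pose b (k : 'I_N) := X ord0 (lift ord0 k).
pose D (i j : 'I_N) := X (lift ord0 i) (lift ord0 j).
pose S (i j : 'I_N) := D i j - b i * b j / a.
pose y' (k : 'I_N) := y (lift ord0 k).
pose u := y ord0 + \sum_(k < N) (b k / a) *: y' k.
have ha : 0 < a.
  have := hp (ext 1 (fun _ => 0)).
  rewrite qf_rec ext0.
  rewrite big1; last by move=> k _; rewrite extS mulr0.
  rewrite big1; last by move=> j _; rewrite extS !mul0r add0r big1 // => k _; rewrite extS !mul0r.
  rewrite !addr0 mulr1 mul1r.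
  apply => [i|]; first by rewrite /ext; case: (unlift _ _); rewrite ?real0 ?real1.
  by exists ord0; rewrite ext0 oner_eq0.
have a0 : a != 0 by rewrite gt_eqF.
have hid : opf X y = a *: (star u * u) + opf S y'.
  have hu : star u = u.
    rewrite /u (star_add hA) hy star_sum; congr (_ + _); apply: eq_bigr => k _.
    by rewrite (star_scale hA) hy conj_Creal // rpredM ?rpredV ?hr.
  rewrite hu /u mulrDl !mulrDr !scalerDr.
  have e1 : a *: (y ord0 * \sum_(k < N) (b k / a) *: y' k)
            = \sum_(k < N) b k *: (y ord0 * y' k).
    rewrite mulr_sumr scaler_sumr; apply: eq_bigr => k _.
    by rewrite -scalerAr scalerA; congr (_ *: _); field.
  have e2 : a *: ((\sum_(k < N) (b k / a) *: y' k) * y ord0)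
            = \sum_(k < N) b k *: (y' k * y ord0).
    rewrite mulr_suml scaler_sumr; apply: eq_bigr => k _.
    by rewrite -scalerAl scalerA; congr (_ *: _); field.
  have e3 : a *: ((\sum_(j < N) (b j / a) *: y' j) * \sum_(k < N) (b k / a) *: y' k)
            = \sum_(j < N) \sum_(k < N) (b j * b k / a) *: (y' j * y' k).
    rewrite mulr_suml scaler_sumr; apply: eq_bigr => j _.
    rewrite mulr_sumr scaler_sumr; apply: eq_bigr => k _.
    by rewrite -scalerAl -scalerAr !scalerA; congr (_ *: _); field.
  have e4 : opf S y' = \sum_(j < N) \sum_(k < N) D j k *: (y' j * y' k)
             - \sum_(j < N) \sum_(k < N) (b j * b k / a) *: (y' j * y' k).
    rewrite /opf -sumrB; apply: eq_bigr => j _; rewrite -sumrB; apply: eq_bigr => k _.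
    by rewrite /S scalerBl.
  rewrite e1 e2 e3 e4 opf_rec big_split /=.
  have -> : \sum_(i < N) X (lift ord0 i) ord0 *: (y (lift ord0 i) * y ord0)
      = \sum_(k < N) b k *: (y' k * y ord0) by apply: eq_bigr => i _; rewrite hs.
  rewrite -!addrA.
  by rewrite (addrC (\sum_(j < N) \sum_(k < N) (b j * b k / a) *: (y' j * y' k))) subrK.
rewrite hid; apply: (pos_add hA); first by apply: (pos_scale hA); [exact: ltW | exact: (pos_sq hA)].
apply: IH.
- by move=> j; apply: hy.
- by move=> i j; rewrite /S /D /b /a rpredB ?rpredM ?rpredV ?hr.
- by move=> i j; rewrite /S /D hs (mulrC (b i)).
move=> v hv [i0 hi0].
pose s := \sum_(k < N) b k * v k.
pose t := - s / a.
have := hp (ext t v).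
have -> : qf X (ext t v) = qf S v.
  rewrite qf_ext.
  have h1 : \sum_(k < N) t * X ord0 (lift ord0 k) * v k = t * s.
    by rewrite /s mulr_sumr; apply: eq_bigr => k _; rewrite mulrA.
  have h2 : \sum_(j < N) (v j * X (lift ord0 j) ord0 * t
       + \sum_(k < N) v j * X (lift ord0 j) (lift ord0 k) * v k)
       = s * t + \sum_(j < N) \sum_(k < N) v j * D j k * v k.
    rewrite big_split /=; congr (_ + _).
    by rewrite /s mulr_suml; apply: eq_bigr => j _; rewrite hs /b; ring.
  have h3 : qf S v = \sum_(j < N) \sum_(k < N) v j * D j k * v k - s * s / a.
    have -> : s * s / a = \sum_(j < N) \sum_(k < N) v j * (b j * b k / a) * v k.
      rewrite /s mulr_suml mulr_suml; apply: eq_bigr => j _.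
      rewrite mulr_sumr mulr_suml; apply: eq_bigr => k _.
      by field.
    rewrite /qf -sumrB; apply: eq_bigr => j _; rewrite -sumrB; apply: eq_bigr => k _.
    by rewrite /S mulrBr mulrBl.
  rewrite h1 h2 h3 /t -/a; field; exact: a0.
apply.
- by move=> i; rewrite /ext; case: (unlift _ _) => [k|]; rewrite ?hv // /t rpredM ?rpredN ?rpredV ?hr ?rpred_sum // => k _; rewrite rpredM ?hv ?hr.
- by exists (lift ord0 i0); rewrite extS.
Qed.
Lemma abel (M : zmodType) (l d a b c g w k e : M) :
  (l + d) - ((a + - k + b) + e) = (l - (a + b + c + g + e)) + (g + d - w) + (c + k + w).
Proof.
rewrite !opprD !opprK !addrA.
rewrite [RHS](ACl ((1*8*2*11*3*6)*((4*10)*(5*7)*(9*12))))%AC /=.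
by rewrite !addNr !addr0.
Qed.
End Help.

(* avg rho W T  stands for  (1/T) \int_0^T <W(t)> dt  for the open system
   (S,L,H) with H = HP + Hun, started in the state rho; hKnown is the
   "Known fact" of the context for this system. *)
Theorem lemma2
  (C : numClosedFieldType) (A : algType C)
  (star : A -> A) (pos : A -> Prop) (hA : star_alg star pos)
  (n : nat) (hn : (1 <= n)%N) (x : 'I_(n + n) -> A) (hx : CCR star x)
  (m : nat) (L : 'I_m -> A)
  (HP Hun : A) (hHP : star HP = HP) (hHun : star Hun = Hun)
  (state : Type) (avg : state -> A -> C -> C)
  (hKnown : forall (V' W' : A) (lam' : C),
      lam' \is Num.real ->
      nonneg_sa star pos V' -> nonneg_sa star pos W' ->
      opLe pos (generator star L (HP + Hun) V' + W') (lam'%:A) ->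
      forall rho : state, limsup_le (avg rho W') lam')
  (gamma delta : C) (hgamma : 0 < gamma) (hdelta : 0 <= delta)
  (p : nat) (w z : 'I_p -> A) (hw : real_vec star w) (hz : real_vec star z)
  (hcomm : forall V : A, inP x V ->
      comm V Hun = \sum_(k < p) comm V (z k) * w k
                   - \sum_(k < p) w k * comm (z k) V)
  (hsector : opLe pos (\sum_(k < p) w k * w k)
                 (gamma^-2 *: (\sum_(k < p) z k * z k) + delta%:A))
  (W : A) (hW : nonneg_sa star pos W)
  (V : A) (hV : inP x V) (lam : C) (hlam : 0 <= lam)
  (hineq : opLe pos
      (- 'i *: comm V HP + lindblad star L V
       + \sum_(k < p) comm V (z k) * comm (z k) V
       + gamma^-2 *: (\sum_(k < p) z k * z k) + W)
      (lam%:A)) :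
  forall rho : state, limsup_le (avg rho W) (lam + delta).

Proof.
move=> rho.
have hx1 := hx.1.
have [hVs hVp] : star V = V /\ pos V.
  case: hV => X [[hXr [hXt hXp]] ->].
  have sym : forall j k, X j k = X k j by move=> j k; rewrite -{1}hXt mxE.
  split.
    rewrite (star_sum hA) exchange_big /=; apply: eq_bigr => j _.
    rewrite (star_sum hA); apply: eq_bigr => k _.
    by rewrite (star_scale hA) (star_mul hA) !hx1 conj_Creal // sym.
  apply: (chol hA (X := fun j k => X j k)) => //.
  move=> v hv [i0 hi0].
  have -> : qf (fun j k => X j k) v = ((\col_i v i)^T *m X *m (\col_i v i)) 0 0.
    rewrite mxE /qf exchange_big; apply: eq_bigr => j _.
    rewrite mxE mulr_suml; apply: eq_bigr => i _; rewrite !mxE //.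
  apply: hXp; first by move=> i; rewrite mxE.
  apply/eqP => h0; move: hi0; apply/negP; rewrite negbK.
  by have := congr1 (fun M : 'M[C]_(n + n, 1) => M i0 0) h0; rewrite !mxE => ->.
apply: (hKnown V W (lam + delta)) => //.
  by rewrite rpredD ?ger0_real.
rewrite /opLe /generator.
have hc : comm V (HP + Hun) = comm V HP + comm V Hun.
  by rewrite /comm mulrDr mulrDl opprD addrACA.
pose u k := comm (z k) V + 'i *: w k.
have eqU : \sum_(k < p) star (u k) * u k = \sum_(k < p) comm V (z k) * comm (z k) V
     + 'i *: comm V Hun + \sum_(k < p) w k * w k.
  rewrite hcomm // scalerBr !scaler_sumr -sumrB -!big_split; apply: eq_bigr => k _.
  rewrite /u (star_add hA) (star_scale hA) conjCi hw.
  have -> : star (comm (z k) V) = comm V (z k) by rewrite /comm (starB hA) !(star_mul hA) hz hVs.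
  set c1 := comm V (z k); set c2 := comm (z k) V; clearbody c1 c2.
  rewrite mulrDl !mulrDr -!scalerAr -!scalerAl !scalerA (mulrN 'i 'i) -expr2 sqrCi opprK scale1r.
  rewrite -[X in _ = X]/(c1 * c2 + ('i *: (c1 * w k) - 'i *: (w k * c2)) + w k * w k).
  by rewrite scaleNr !addrA.
rewrite hc scalerDr scaleNr -(scaleNr 'i) scalerDl -/(lindblad _ _ _).
rewrite (scaleNr 'i (comm V Hun)) (abel _ _ _ _ (\sum_(k < p) comm V (z k) * comm (z k) V) (gamma^-2 *: (\sum_(k < p) z k * z k)) (\sum_(k < p) w k * w k)).
apply: (pos_add hA); first apply: (pos_add hA).
- exact: hineq.
- exact: hsector.
rewrite -eqU; apply: (pos_sum hA) => k; exact: (pos_sq hA).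
Qed.
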